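(* Fix $x\in\mathbb{R}^d$ and let $L=\lceil 640\,d\ln k\rceil$. Then for every step $t$ with $D_t>0$, $$\Pr\big\{D_{t+L}\ge D_t/2\mid\mathcal{T}_t\big\}\le\frac1{k^3}.$$
   Context: Centers $C=\{c^1,\dots,c^k\}\subset\mathbb{R}^d$, $\delta\in(0,1)$, $\varepsilon=\min\{\delta/(15\ln k),1/320\}$. A median of a finite nonempty $S\subset\mathbb{R}^d$ is a point $m$ such that for every coordinate $i$ each of $\{c\in S:c_i<m_i\}$, $\{c\in S:c_i>m_i\}$ has at most $|S|/2$ elements. Algorithm: $\mathcal{T}_1$ is a root (cell $\mathbb{R}^d$) with assigned centers $C$. For $t=1,2,\dots$, while some leaf has at least two assigned centers: sample independently $i_t$ uniform in $\{1,\dots,d\}$, $\theta_t$ uniform in $(0,1)$, $\sigma_t$ uniform in $\{\pm1\}$; to every leaf $u$ of $\mathcal{T}_t$ with $|C_u|\ge2$ apply Divide-and-Share with $(i,\theta,\sigma)=(i_t,\theta_t,\sigma_t)$, giving $\mathcal{T}_{t+1}$. Divide-and-Share on node $u$: $m^u$ a median of $C_u$, $R_u=\max_{c\in C_u}\|c-m^u\|_2$, $Left=\{c\in C_u:c_i\le m^u_i+(\sigma+\varepsilon)\sqrt\theta R_u\}$, $Right=\{c\in C_u:c_i\ge m^u_i+(\sigma-\varepsilon)\sqrt\theta R_u\}$; if both nonempty, $u$ is split into children $\{y\in u: y_i\le m^u_i+\sigma\sqrt\theta R_u\}$ with centers $Left$ and $\{y\in u: y_i> m^u_i+\sigma\sqrt\theta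 R_u\}$ with centers $Right$; otherwise $u$ is unchanged. For the fixed $x$, $u_t$ is the leaf of $\mathcal{T}_t$ containing $x$, $C_t=C_{u_t}$, $D_t=\max\{\|a-b\|_2:a,b\in C_t\}$. If the algorithm has stopped before step $s$, $\mathcal{T}_s$ denotes the final tree. *)

(* Defs.v *)
From HB Require Import structures.
From mathcomp Require Import all_boot all_order all_algebra.
From mathcomp Require Import all_classical all_reals all_analysis.
Set Implicit Arguments. Unset Strict Implicit. Unset Printing Implicit Defensive.
Import Order.TTheory GRing.Theory Num.Theory.
Import numFieldNormedType.Exports.
Local Open Scope ring_scope.

Section Algo.
Variables (R : realType) (d : nat).

Definition Rpoint := 'rV[R]_d.
Definition coord (p : Rpoint) (i : 'I_d) : R := p ord0 i.

Definition enorm (p : Rpoint) : R := Num.sqrt (\sum_(i < d) coord p i ^+ 2).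

Definition is_median (S : seq Rpoint) (m : Rpoint) : Prop :=
  forall i : 'I_d,
    (count (fun c => coord c i < coord m i) S)%:R <= (size S)%:R / 2 :> R /\
    (count (fun c => coord c i > coord m i) S)%:R <= (size S)%:R / 2 :> R.

(* a leaf: its cell (a subset of R^d) and its assigned centers *)
Definition leaf := (pred Rpoint * seq Rpoint)%type.
Definition tree := seq leaf.

(* one random ds_draw (i, theta, sigma); sigma = +1 iff the boolean is true *)
Definition ds_draw := ('I_d * R * bool)%type.
Definition sgn (b : bool) : R := if b then 1 else -1.

Variables (med : seq Rpoint -> Rpoint) (eps : R).

Definition cradius (S : seq Rpoint) (m : Rpoint) : R :=
  \big[Num.max/0]_(c <- S) enorm (c - m).

Definition cdiam (S : seq Rpoint) : R :=
  \big[Num.max/0]_(a <- S) \big[Num.max/0]_(b <- S) enorm (a - b).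

Definition divide_share (w : ds_draw) (u : leaf) : seq leaf :=
  let: (i, theta, s) := w in
  let: (cell, Cu) := u in
  if (size Cu >= 2)%N then
    let m := med Cu in
    let Ru := cradius Cu m in
    let Left := [seq c <- Cu | coord c i <= coord m i + (sgn s + eps) * Num.sqrt theta * Ru] in
    let Right := [seq c <- Cu | coord c i >= coord m i + (sgn s - eps) * Num.sqrt theta * Ru] in
    let thr := coord m i + sgn s * Num.sqrt theta * Ru in
    if (Left != [::]) && (Right != [::]) then
      [:: ((fun y => cell y && (coord y i <= thr)), Left);
          ((fun y => cell y && (coord y i > thr)), Right)]
    else [:: u]
  else [:: u].

Definition ds_step (w : ds_draw) (T : tree) : tree := flatten (map (divide_share w) T).

Definition tree_after (C : seq Rpoint) (h : seq ds_draw) : tree :=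
  foldl (fun T w => ds_step w T) [:: ((fun _ => true) : pred Rpoint, C)] h.

Definition leaf_centers (x : Rpoint) (T : tree) : seq Rpoint :=
  (nth ((fun _ => true) : pred Rpoint, [::]) T (find (fun u : leaf => u.1 x) T)).2.

Local Open Scope ereal_scope.
(* Probability that event E holds on the tree obtained from T after n further
   independent draws (i uniform in 'I_d, theta uniform in (0,1), sigma uniform
   in {+1,-1}); defined as the iterated expectation. *)
Fixpoint prob_after (n : nat) (E : tree -> bool) (T : tree) : \bar R :=
  match n with
  | 0 => (if E T then 1 else 0)
  | n'.+1 =>
      ((2 * d%:R)^-1)%:E *
      (\sum_(i < d) \sum_(s : bool)
         \int[@lebesgue_measure R]_(theta in `]0%R, 1%R[%classic)
            prob_after n' E (ds_step (i, theta, s) T))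
  end.
End Algo.

(* Main.v *)
Require Import Defs.
From HB Require Import structures.
From mathcomp Require Import all_boot all_order all_algebra.
From mathcomp Require Import all_classical all_reals all_analysis.
From mathcomp Require Import measurable_realfun.
From mathcomp Require Import ring lra.
Import Order.TTheory GRing.Theory Num.Theory.
Local Open Scope ring_scope.
Set Implicit Arguments. Unset Strict Implicit. Unset Printing Implicit Defensive.

Module P1.
Section BMax.
Variables (R : realType) (T : eqType) (F : T -> R).

Lemma bmax_ge0 (s : seq T) : 0 <= \big[Num.max/0]_(y <- s) F y.
Proof.
elim: s => [|a s IH]; first by rewrite big_nil.
by rewrite big_cons le_max IH orbT.
Qed.

Lemma bmax_le (s : seq T) M : 0 <= M -> (forall a, a \in s -> F a <= M) ->
  \big[Num.max/0]_(y <- s) F y <= M.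
Proof.
move=> M0; elim: s => [|a s IH] H; first by rewrite big_nil.
rewrite big_cons ge_max H ?mem_head //=.
by rewrite IH // => y Hy; apply: H; rewrite in_cons Hy orbT.
Qed.

Lemma bmax_ge (s : seq T) a : a \in s -> F a <= \big[Num.max/0]_(y <- s) F y.
Proof.
elim: s => [|b s IH] //=; rewrite in_cons => /orP[/eqP->|H]; rewrite big_cons le_max ?lexx //.
by rewrite IH ?orbT.
Qed.

Lemma bmax_attain (s : seq T) : 0 < \big[Num.max/0]_(y <- s) F y ->
  exists2 a, a \in s & \big[Num.max/0]_(y <- s) F y = F a.
Proof.
elim: s => [|b s IH]; first by rewrite big_nil ltxx.
rewrite big_cons; case: (leP (F b) (\big[Num.max/0]_(j <- s) F j)) => Hb H.
  by have [a Ha ->] := IH H; exists a => //; rewrite in_cons Ha orbT.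
by exists b => //; rewrite mem_head.
Qed.
End BMax.

Section IntMono.
Local Open Scope ereal_scope.
Context d (T : measurableType d) (R : realType).
Variable mu : {measure set T -> \bar R}.

Lemma le_int_nm (D : set T) (f g : T -> \bar R) :
  (forall x, D x -> 0 <= f x) -> (forall x, D x -> f x <= g x) ->
  \int[mu]_(x in D) f x <= \int[mu]_(x in D) g x.
Proof.
move=> f0 fg.
have g0 : forall x, D x -> 0 <= g x by move=> x Dx; exact: le_trans (f0 _ Dx) (fg _ Dx).
rewrite (ge0_integralE mu f0) (ge0_integralE mu g0).
apply: ereal_sup_le => _ [h hf <-]; exists h => //= x.
apply: le_trans (hf x) _.
rewrite /patch; case: ifP => // /[!inE] Dx; exact: fg.
Qed.
End IntMono.
Arguments bmax_ge0 {R T} F s.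
Arguments bmax_le {R T} F {s M}.
Arguments bmax_ge {R T} F {s a}.
Arguments bmax_attain {R T} F {s}.

End P1.
Import P1.

Module P2.

Section Tree.
Variables (R : realType) (d : nat) (med : seq (Rpoint R d) -> Rpoint R d) (eps : R) (x : Rpoint R d).
Local Notation P := (Rpoint R d).
Local Notation crd := (@Defs.coord R d).

Definition gstep (w : ds_draw R d) (C : seq P) : seq P :=
  let: (i, theta, s) := w in
  if (size C >= 2)%N then
    let m := med C in
    let Ru := cradius C m in
    let Left := [seq c <- C | crd c i <= crd m i + (sgn R s + eps) * Num.sqrt theta * Ru] in
    let Right := [seq c <- C | crd c i >= crd m i + (sgn R s - eps) * Num.sqrt theta * Ru] in
    let thr := crd m i + sgn R s * Num.sqrt theta * Ru in
    if (Left != [::]) && (Right != [::]) then (if crd x i <= thr then Left else Right) else C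
  else C.

Lemma lc_cons (u : leaf R d) T :
  leaf_centers x (u :: T) = if u.1 x then u.2 else leaf_centers x T.
Proof. by rewrite /leaf_centers /=; case: ifP. Qed.

Lemma lc_nil : leaf_centers x ([::] : tree R d) = [::].
Proof. by []. Qed.

Lemma lc_cat (T1 T2 : tree R d) :
  leaf_centers x (T1 ++ T2) =
  if has (fun u : leaf R d => u.1 x) T1 then leaf_centers x T1 else leaf_centers x T2.
Proof.
elim: T1 => [|u T1 IH] //=.
rewrite !lc_cons; case: ifP => //= _; exact: IH.
Qed.

Lemma lc_step w T :
  leaf_centers x (ds_step med eps w T) = gstep w (leaf_centers x T).
Proof.
case: w => [[i th] s].
elim: T => [|u T IH].
  by rewrite /ds_step /= lc_nil.
rewrite /ds_step /= lc_cat -/(ds_step med eps (i,th,s) T) IH lc_cons.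
case: u => [cell Cu] /=.
case Hx: (cell x) => /=.
- rewrite /divide_share /=.
  case: (2 <= size Cu)%N => /=; last by rewrite Hx lc_cons /= Hx.
  case: ((_ != [::]) && (_ != [::])) => /=; last by rewrite Hx lc_cons /= Hx.
  rewrite Hx /=.
  case Hc: (crd x i <= _) => /=; rewrite lc_cons /= Hx Hc //=.
  by rewrite lc_cons /= Hx ltNge Hc.
- rewrite /divide_share /=.
  case: (2 <= size Cu)%N => /=; last by rewrite Hx.
  case: ((_ != [::]) && (_ != [::])) => /=; last by rewrite Hx.
  by rewrite Hx.
Qed.

Lemma gstep_sub w C : {subset gstep w C <= C}.
Proof.
case: w => [[i th] s] /= c; case: ifP => // _.
case: ifP => // _; case: ifP => _; by rewrite mem_filter => /andP[].
Qed.

End Tree.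

End P2.
Import P2.

Module P3.

Section Geo.
Variables (R : realType) (d : nat).
Local Notation P := (Rpoint R d).
Local Notation crd := (@Defs.coord R d).

Definition sq (p : P) : R := \sum_(i < d) crd p i ^+ 2.

Lemma sq_ge0 p : 0 <= sq p.
Proof. by apply: sumr_ge0 => i _; rewrite sqr_ge0. Qed.

Lemma enorm_ge0 (p : P) : 0 <= enorm p.
Proof. exact: sqrtr_ge0. Qed.

Lemma enorm_sq (p : P) : enorm p ^+ 2 = sq p.
Proof. by rewrite /enorm sqr_sqrtr // sq_ge0. Qed.

Lemma crd_sq (p : P) i : crd p i ^+ 2 <= sq p.
Proof.
rewrite /sq (bigD1 i) //= lerDl; apply: sumr_ge0 => j _; exact: sqr_ge0.
Qed.

Lemma crdB (a b : P) i : crd (a - b) i = crd a i - crd b i.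
Proof. by rewrite /Defs.coord !mxE. Qed.

Lemma sqB (a b : P) : sq (a - b) = \sum_(i < d) (crd a i - crd b i) ^+ 2.
Proof. by apply: eq_bigr => i _; rewrite crdB. Qed.

Lemma cdiam_ge0 (S : seq P) : 0 <= cdiam S.
Proof. exact: bmax_ge0. Qed.

Lemma cdiam_ge (S : seq P) a b : a \in S -> b \in S -> enorm (a - b) <= cdiam S.
Proof.
move=> Ha Hb; rewrite /cdiam.
have H1 := bmax_ge (fun a => \big[Num.max/0]_(b <- S) enorm (a - b)) Ha.
have H2 := bmax_ge (fun b => enorm (a - b)) Hb.
exact: le_trans H2 H1.
Qed.

Lemma cdiam_sub (S S' : seq P) : {subset S <= S'} -> cdiam S <= cdiam S'.
Proof.
move=> HS; apply: bmax_le; first exact: cdiam_ge0.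
move=> a Ha; apply: bmax_le; first exact: cdiam_ge0.
by move=> b Hb; apply: cdiam_ge; apply: HS.
Qed.

Lemma cdiam_attain (S : seq P) y : 0 < y -> y <= cdiam S ->
  exists a, exists b, [/\ a \in S, b \in S & y <= enorm (a - b)].
Proof.
move=> y0 hy.
have [a Ha Ea] := bmax_attain _ (lt_le_trans y0 hy).
rewrite /cdiam Ea in hy.
have [b Hb Eb] := bmax_attain _ (lt_le_trans y0 hy).
by exists a, b; split => //; rewrite -Eb.
Qed.

Lemma cradius_ge (S : seq P) (m : P) c : c \in S -> enorm (c - m) <= cradius S m.
Proof. move=> Hc; exact: (bmax_ge (fun c => enorm (c - m)) Hc). Qed.

Lemma cradius_ge0 (S : seq P) (m : P) : 0 <= cradius S m.
Proof. exact: bmax_ge0. Qed.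

Lemma cradius_cases (S : seq P) (m : P) : cradius S m = 0 \/ exists2 c, c \in S & cradius S m = enorm (c - m).
Proof.
have := cradius_ge0 S m; rewrite le_eqVlt => /orP[/eqP<-|H]; first by left.
by right; apply: bmax_attain.
Qed.

Lemma sum_if_count (T : Type) (p : pred T) (s : seq T) (v : R) :
  \sum_(c <- s) (if p c then v else 0) = (count p s)%:R * v.
Proof.
elim: s => [|a s IH]; first by rewrite big_nil mul0r.
rewrite big_cons IH /=; case: (p a) => /=; last by rewrite add0r add0n.
by rewrite natrD mulrDl mul1r.
Qed.

Lemma med_coord (S : seq P) (m : P) c i : is_median S m -> c \in S ->
  (crd c i - crd m i) ^+ 2 * (size S)%:R <= 2 * \sum_(c' <- S) (crd c i - crd c' i) ^+ 2.
Proof.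
move=> Hm Hc; have [Hlt Hgt] := Hm i.
set v := (crd c i - crd m i) ^+ 2.
have v0 : 0 <= v by rewrite sqr_ge0.
have Hsz : (size S)%:R = (count (fun c0 => crd c0 i < crd m i) S)%:R
   + (count (predC (fun c0 => crd c0 i < crd m i)) S)%:R :> R.
  by rewrite -natrD count_predC.
have Hsz' : (size S)%:R = (count (fun c0 => crd c0 i > crd m i) S)%:R
   + (count (predC (fun c0 => crd c0 i > crd m i)) S)%:R :> R.
  by rewrite -natrD count_predC.
case: (leP (crd m i) (crd c i)) => Hcm.
- have H1 : \sum_(c' <- S) (if (predC (fun c0 => crd c0 i > crd m i)) c' then v else 0)
            <= \sum_(c' <- S) (crd c i - crd c' i) ^+ 2.
    apply: ler_sum => c' _ /=; case: ifP => H; last exact: sqr_ge0.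
    rewrite -leNgt in H.
    rewrite /v; nra.
  rewrite sum_if_count in H1.
  set n1 := (count _ S)%:R in H1 Hsz'.
  set n2 := (count _ S)%:R in Hgt Hsz'.
  have Hn : (size S)%:R <= 2 * n1 by lra.
  have := ler_wpM2l v0 Hn; nra.
- have H1 : \sum_(c' <- S) (if (predC (fun c0 => crd c0 i < crd m i)) c' then v else 0)
            <= \sum_(c' <- S) (crd c i - crd c' i) ^+ 2.
    apply: ler_sum => c' _ /=; case: ifP => H; last exact: sqr_ge0.
    rewrite -leNgt in H.
    rewrite /v; nra.
  rewrite sum_if_count in H1.
  set n1 := (count _ S)%:R in H1 Hsz.
  set n2 := (count _ S)%:R in Hlt Hsz.
  have Hn : (size S)%:R <= 2 * n1 by lra.
  have := ler_wpM2l v0 Hn; nra.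
Qed.

Lemma med_bound (S : seq P) (m : P) c : is_median S m -> c \in S ->
  sq (c - m) <= 2 * cdiam S ^+ 2.
Proof.
move=> Hm Hc.
have Hs : (0 < size S)%N by case: S Hm Hc.
have Hs' : 0 < (size S)%:R :> R by rewrite ltr0n.
have H1 : sq (c - m) * (size S)%:R <= 2 * \sum_(c' <- S) sq (c - c').
  rewrite sqB mulr_suml.
  apply: le_trans (ler_sum _ (fun i _ => med_coord i Hm Hc)) _.
  rewrite -mulr_sumr; rewrite ler_pM2l //.
  rewrite (exchange_big); apply: ler_sum => c' _; rewrite sqB //.
have H2 : \sum_(c' <- S) sq (c - c') <= (size S)%:R * cdiam S ^+ 2.
  apply: le_trans (_ : \sum_(c' <- S) cdiam S ^+ 2 <= _).
    rewrite big_seq [X in _ <= X]big_seq; apply: ler_sum => c' Hc'; rewrite -enorm_sq.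
    have := cdiam_ge Hc Hc'; have := enorm_ge0 (c - c'); nra.
  have := sum_if_count predT S (cdiam S ^+ 2); rewrite count_predT => <-.
  by [] .
have := cdiam_ge0 S => D0.
have := sq_ge0 (c - m) => s0.
rewrite -(ler_pM2r Hs'); nra.
Qed.

End Geo.

End P3.
Import P3.

Module P4.

Section Num.
Variable R : realType.
Definition pos (y : R) := Num.max y 0.

Lemma pos_ge (y : R) : y <= pos y.
Proof. by rewrite /pos le_max lexx. Qed.
Lemma pos_ge0 (y : R) : 0 <= pos y.
Proof. by rewrite /pos le_max lexx orbT. Qed.
Lemma pos_id (y : R) : 0 <= y -> pos y = y.
Proof. move=> h; rewrite /pos; apply/eqP; rewrite eq_le le_max lexx /= ge_max lexx h //. Qed.
Lemma pos_0 (y : R) : y <= 0 -> pos y = 0.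
Proof. move=> h; rewrite /pos; apply/eqP; rewrite eq_le le_max lexx orbT /= ge_max lexx h //. Qed.

Lemma AB_facts (e : R) : 0 < e <= 1/320 ->
  let A := ((1+e)^+2)^-1 in let B := ((1-e)^+2)^-1 in
  31/32 <= A /\ A <= B /\ B - A <= 1/64.
Proof.
move=> /andP[e0 e1] A B.
have hA : A * (1+e)^+2 = 1 by rewrite /A mulVf // sqrf_eq0; lra.
have hB : B * (1-e)^+2 = 1 by rewrite /B mulVf // sqrf_eq0; lra.
have A0 : 0 < A by rewrite /A invr_gt0 exprn_gt0 //; lra.
have B0 : 0 < B by rewrite /B invr_gt0 exprn_gt0 //; lra.
have A1 : A <= 1 by nra.
have B1 : B <= 5/4 by nra.
have BA : B - A = 4 * e * A * B.
  have : (B - A) * ((1+e)^+2 * (1-e)^+2) = 4 * e * A * B * ((1+e)^+2 * (1-e)^+2).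
    have -> : 4 * e * A * B * ((1+e)^+2 * (1-e)^+2) = 4 * e * ((A * (1+e)^+2) * (B * (1-e)^+2)) by ring.
    rewrite hA hB mulrBl mulrCA hB mulr1 mulrA hA mul1r; ring.
  move/mulIf; apply; rewrite mulf_neq0 // sqrf_eq0; lra.
split; first nra.
split; nra.
Qed.

Lemma coord_ineq (al be e r : R) : al <= be -> 0 < e <= 1/320 -> 0 < r ->
   ((31/64) * (be - al)^+2 - (1/64) * (al^+2 + be^+2)) / r^+2 <=
   ((pos be / ((1+e)*r))^+2 - (pos al/((1-e)*r))^+2) +
   ((pos (-al)/((1+e)*r))^+2 - (pos (-be)/((1-e)*r))^+2).
Proof.
move=> hab he r0.
have [A1 [AB BA]] := AB_facts he.
move: A1 AB BA.
set A := ((1+e)^+2)^-1; set B := ((1-e)^+2)^-1 => A1 AB BA.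
case/andP: he => e0 e1.
have EA y : (y / ((1+e)*r))^+2 = A * y^+2 / r^+2.
  rewrite /A; field; apply/andP; split; apply/eqP; lra.
have EB y : (y / ((1-e)*r))^+2 = B * y^+2 / r^+2.
  rewrite /B; field; apply/andP; split; apply/eqP; lra.
rewrite !EA !EB -!mulrBl -mulrDl.
apply: ler_wpM2r; first by rewrite invr_ge0 sqr_ge0.
case: (leP 0 al) => h1.
- have h2 : 0 <= be by lra.
  rewrite (pos_id h1) (pos_id h2) (@pos_0 (-al)) ?(@pos_0 (-be)); try lra.
  have p1 : 0 <= (be - al) * al by nra.
  have p2 : 0 <= (A - 31/32) * (be^+2 - al^+2) by apply: mulr_ge0; nra.
  have p3 : 0 <= (1/64 - (B - A)) * al^+2 by apply: mulr_ge0; [lra|exact: sqr_ge0].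
  nra.
- case: (leP 0 be) => h2.
  + rewrite (@pos_0 al) ?(pos_id h2) ?(@pos_id (-al)) ?(@pos_0 (-be)); try lra.
    have p2 : 0 <= (A - 31/32) * (be^+2 + al^+2) by apply: mulr_ge0; nra.
    have p1 : 0 <= (be + al)^+2 by exact: sqr_ge0.
    rewrite sqrrN expr0n /= mulr0 subr0.
    nra.
  + rewrite (@pos_0 al) ?(@pos_0 be) ?(@pos_id (-al)) ?(@pos_id (-be)); try lra.
    have p1 : 0 <= (be - al) * (- be) by nra.
    have p2 : 0 <= (A - 31/32) * (al^+2 - be^+2) by apply: mulr_ge0; nra.
    have p3 : 0 <= (1/64 - (B - A)) * be^+2 by apply: mulr_ge0; [lra|exact: sqr_ge0].
    nra.
Qed.
End Num.

End P4.
Import P4.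

Module P5.

Section Sep.
Variables (R : realType) (d : nat) (med : seq (Rpoint R d) -> Rpoint R d) (eps : R) (x : Rpoint R d).
Local Notation P := (Rpoint R d).
Local Notation crd := (@Defs.coord R d).

Definition Rr (C : seq P) := cradius C (med C).
Definition alpha (C : seq P) i (a b : P) :=
  (if crd a i <= crd b i then crd a i else crd b i) - crd (med C) i.
Definition beta (C : seq P) i (a b : P) :=
  (if crd a i <= crd b i then crd b i else crd a i) - crd (med C) i.
Definition lI C i (s : bool) a b :=
  if s then (pos (alpha C i a b) / ((1 - eps) * Rr C)) ^+ 2
  else (pos (- beta C i a b) / ((1 - eps) * Rr C)) ^+ 2.
Definition uI C i (s : bool) a b :=
  if s then (pos (beta C i a b) / ((1 + eps) * Rr C)) ^+ 2
  else (pos (- alpha C i a b) / ((1 + eps) * Rr C)) ^+ 2.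

Lemma size2 (C : seq P) a b : a \in C -> b \in C -> a != b -> (1 < size C)%N.
Proof.
case: C => [|c [|c' C']] //.
by rewrite !mem_seq1 => /eqP-> /eqP->; rewrite eqxx.
Qed.

Lemma sep_core (C : seq P) i th s c1 c2 : 0 <= eps -> c1 \in C -> c2 \in C -> (1 < size C)%N ->
  crd c1 i < crd (med C) i + (sgn R s - eps) * Num.sqrt th * Rr C ->
  crd (med C) i + (sgn R s + eps) * Num.sqrt th * Rr C < crd c2 i ->
  ~~ ((c1 \in gstep med eps x (i, th, s) C) && (c2 \in gstep med eps x (i, th, s) C)).
Proof.
move=> e0 H1 H2 Hs h1 h2.
have r0 := sqrtr_ge0 th; have R0 := cradius_ge0 C (med C).
have q : 0 <= eps * Num.sqrt th * Rr C by rewrite mulr_ge0 // mulr_ge0.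
have E1 : (sgn R s + eps) * Num.sqrt th * Rr C =
   (sgn R s - eps) * Num.sqrt th * Rr C + 2 * (eps * Num.sqrt th * Rr C) by ring.
rewrite /Rr in E1 h1 h2 q.
rewrite /gstep Hs.
set L := [seq c <- C | crd c i <= _].
set Rt := [seq c <- C | _ <= crd c i].
have c1L : c1 \in L by rewrite mem_filter H1 andbT; lra.
have c1R : c1 \notin Rt by rewrite mem_filter H1 andbT -ltNge.
have c2R : c2 \in Rt by rewrite mem_filter H2 andbT; lra.
have c2L : c2 \notin L by rewrite mem_filter H2 andbT -ltNge; lra.
have -> : (L != [::]) && (Rt != [::]).
  by apply/andP; split; apply/eqP => E; [rewrite E in c1L|rewrite E in c2R].
by case: ifP => _; [rewrite (negbTE c2L) andbF | rewrite (negbTE c1R)].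
Qed.

Lemma pos_gt0 (y : R) : 0 < pos y -> pos y = y.
Proof.
move=> h; case: (leP 0 y) => hy; first exact: pos_id.
by rewrite pos_0 ?ltxx // ltW in h *.
Qed.

Lemma sep (C : seq P) i th s a b : 0 <= eps < 1 -> a \in C -> b \in C -> a != b ->
  lI C i s a b < th < uI C i s a b ->
  ~~ ((a \in gstep med eps x (i, th, s) C) && (b \in gstep med eps x (i, th, s) C)).
Proof.
move=> /andP[e0 e1] Ha Hb ab /andP[hl hu].
have Hs := size2 Ha Hb ab.
have R0 : 0 <= Rr C := cradius_ge0 C (med C).
have l0 : 0 <= lI C i s a b by rewrite /lI; case: ifP => _; exact: sqr_ge0.
have th0 : 0 < th by apply: le_lt_trans hl.
have Rpos : 0 < Rr C.
  rewrite lt_neqAle R0 andbT; apply/eqP => E.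
  have : uI C i s a b = 0 by rewrite /uI -E; case: ifP => _; rewrite mulr0 invr0 mulr0 expr0n.
  lra.
have ep1 : 0 < 1 + eps by lra.
have em1 : 0 < 1 - eps by lra.
set r := Num.sqrt th.
have r0 : 0 < r by rewrite sqrtr_gt0.
have key y c : 0 <= y -> 0 < c -> (y / (c * Rr C))^+2 < th -> y < c * r * Rr C.
  move=> y0 c0 h.
  have cR : 0 < c * Rr C by rewrite mulr_gt0.
  have : Num.sqrt ((y / (c * Rr C))^+2) < r by rewrite ltr_sqrt.
  rewrite sqrtr_sqr ger0_norm; last by apply: divr_ge0 => //; apply: ltW.
  rewrite ltr_pdivrMr // => H.
  by have -> : c * r * Rr C = r * (c * Rr C) by ring.
have key2 y c : 0 <= y -> 0 < c -> th < (y / (c * Rr C))^+2 -> c * r * Rr C < y.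
  move=> y0 c0 h.
  have cR : 0 < c * Rr C by rewrite mulr_gt0.
  have : r < Num.sqrt ((y / (c * Rr C))^+2) by rewrite ltr_sqrt // (lt_trans th0).
  rewrite sqrtr_sqr ger0_norm; last by apply: divr_ge0 => //; apply: ltW.
  rewrite ltr_pdivlMr // => H.
  by have -> : c * r * Rr C = r * (c * Rr C) by ring.
have hlo : (if crd a i <= crd b i then crd a i else crd b i) <
           crd (med C) i + (sgn R s - eps) * r * Rr C.
  move: hl hu; rewrite /lI /uI; case E: s => /= hl hu.
  - have := key _ _ (pos_ge0 _) em1 hl.
    have := pos_ge (alpha C i a b); rewrite /alpha; lra.
  - have h := key2 _ _ (pos_ge0 _) ep1 hu.
    have hh : 0 < (1 + eps) * r * Rr C by rewrite !mulr_gt0 //; lra.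
    have hp : 0 < pos (- alpha C i a b) by lra.
    move: h; rewrite (pos_gt0 hp) /alpha.
    have -> : (-1 - eps) * r * Rr C = - ((1 + eps) * r * Rr C) by ring.
    lra.
have hhi : crd (med C) i + (sgn R s + eps) * r * Rr C <
           (if crd a i <= crd b i then crd b i else crd a i).
  move: hl hu; rewrite /lI /uI; case E: s => /= hl hu.
  - have h := key2 _ _ (pos_ge0 _) ep1 hu.
    have hh : 0 < (1 + eps) * r * Rr C by rewrite !mulr_gt0 //; lra.
    have hp : 0 < pos (beta C i a b) by lra.
    move: h; rewrite (pos_gt0 hp) /beta; lra.
  - have := key _ _ (pos_ge0 _) em1 hl.
    have := pos_ge (- beta C i a b); rewrite /beta.
    have -> : (-1 + eps) * r * Rr C = - ((1 - eps) * r * Rr C) by ring.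
    lra.
move: hlo hhi; case: ifP => _ hlo hhi.
- exact: sep_core e0 Ha Hb Hs hlo hhi.
- by rewrite andbC; exact: sep_core e0 Hb Ha Hs hlo hhi.
Qed.

End Sep.

End P5.
Import P5.

Module P6.

Section Core.
Variables (R : realType) (d : nat) (med : seq (Rpoint R d) -> Rpoint R d) (eps : R).
Local Notation P := (Rpoint R d).
Local Notation crd := (@Defs.coord R d).

Lemma coord_le_R (C : seq P) i c : c \in C ->
  crd c i - crd (med C) i <= Rr med C /\ crd (med C) i - crd c i <= Rr med C.
Proof.
move=> Hc.
have h1 := crd_sq (c - med C) i; rewrite crdB in h1.
have h2 := enorm_sq (c - med C).
have h3 := cradius_ge (med C) Hc.
have h4 := enorm_ge0 (c - med C).
rewrite /Rr; split; nra.
Qed.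

Lemma uI_le1 (C : seq P) i s a b : 0 <= eps -> a \in C -> b \in C -> uI med eps C i s a b <= 1.
Proof.
move=> e0 Ha Hb.
have R0 : 0 <= Rr med C := cradius_ge0 C (med C).
case: (eqVneq (Rr med C) 0) => HR.
  by rewrite /uI HR; case: ifP => _; rewrite mulr0 invr0 mulr0 expr0n.
have Rp : 0 < Rr med C by rewrite lt_neqAle eq_sym HR.
have [a1 a2] := coord_le_R i Ha.
have [b1 b2] := coord_le_R i Hb.
have key y : y <= Rr med C -> (pos y / ((1 + eps) * Rr med C)) ^+ 2 <= 1.
  move=> hy.
  have hp : pos y <= Rr med C.
    case: (leP 0 y) => h; [by rewrite pos_id | by rewrite pos_0 // ltW].
  have c0 : 0 < (1 + eps) * Rr med C by rewrite mulr_gt0 //; lra.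
  rewrite exprn_ile1 //; first by rewrite divr_ge0 ?pos_ge0 // ltW.
  rewrite ler_pdivrMr // mul1r; nra.
rewrite /uI /alpha /beta; case: ifP => _; apply: key; case: ifP => _; rewrite ?opprB; [exact: b1|exact: a1|exact: a2|exact: b2].
Qed.

Lemma sq_tri (a b m : P) : sq (a - b) <= 2 * (sq (a - m) + sq (b - m)).
Proof.
rewrite !sqB -big_split mulr_sumr /=; apply: ler_sum => i _; have := sqr_ge0 (crd a i + crd b i - 2 * crd m i); nra.
Qed.

Lemma core_len (C : seq P) a b Dt : 0 < eps <= 1/320 -> is_median C (med C) ->
  a \in C -> b \in C -> cdiam C <= Dt -> Dt / 2 <= enorm (a - b) -> 0 < Dt ->
  1/40 <= \sum_(i < d) \sum_(s : bool) Num.max (uI med eps C i s a b - lI med eps C i s a b) 0.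
Proof.
move=> he Hm Ha Hb HD Hab Dt0.
set m := med C.
have R0 : 0 <= Rr med C := cradius_ge0 C (med C).
have hab : Dt^+2 / 4 <= sq (a - b).
  rewrite -enorm_sq; have := enorm_ge0 (a - b); nra.
have ham : sq (a - m) <= Rr med C ^+ 2.
  rewrite -enorm_sq; have := enorm_ge0 (a - m); have := cradius_ge m Ha; rewrite /Rr; nra.
have hbm : sq (b - m) <= Rr med C ^+ 2.
  rewrite -enorm_sq; have := enorm_ge0 (b - m); have := cradius_ge m Hb; rewrite /Rr; nra.
have hR2 : Rr med C ^+ 2 <= 2 * Dt ^+ 2.
  have D0 := cdiam_ge0 C.
  rewrite /Rr; case: (cradius_cases C m) => [->|[c Hc ->]]; first by nra.
  rewrite enorm_sq; have := med_bound Hm Hc; nra.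
have Rp : 0 < Rr med C.
  rewrite lt_neqAle R0 andbT; apply/eqP => E.
  rewrite -E in ham hbm; have := sq_tri a b m; nra.
have ep : 0 < eps <= 1/320 := he.
case/andP: he => e0 e1.
have step : \sum_(i < d) ((31/64) * (crd a i - crd b i)^+2
              - (1/64) * ((crd a i - crd m i)^+2 + (crd b i - crd m i)^+2)) / Rr med C ^+ 2
   <= \sum_(i < d) \sum_(s : bool) Num.max (uI med eps C i s a b - lI med eps C i s a b) 0.
  apply: ler_sum => i _; rewrite big_bool /=.
  have hab' : alpha med C i a b <= beta med C i a b.
    rewrite /alpha /beta; case: ifP => h; last move/negbT: h; rewrite ?ltNge; lra.
  have := coord_ineq hab' ep Rp.
  have E1 : (beta med C i a b - alpha med C i a b) ^+ 2 = (crd a i - crd b i) ^+ 2.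
    by rewrite /alpha /beta; case: ifP => _; ring.
  have E2 : alpha med C i a b ^+ 2 + beta med C i a b ^+ 2 =
            (crd a i - crd m i) ^+ 2 + (crd b i - crd m i) ^+ 2.
    by rewrite /alpha /beta; case: ifP => _; ring.
  rewrite E1 E2 => H; apply: le_trans H _.
  rewrite /uI /lI /=; apply: lerD; rewrite le_max lexx //.
apply: le_trans step.
rewrite -mulr_suml sumrB -!mulr_sumr big_split /= -!sqB.
rewrite ler_pdivlMr ?exprn_gt0 //.
move: hab ham hbm hR2; set X := Rr med C ^+ 2; set S := sq (a - b); set Y := sq (a - m); set Z := sq (b - m); set W := Dt ^+ 2.
move=> hab ham hbm hR2.
have X0 : 0 <= X by rewrite /X sqr_ge0.
lra.
Qed.
End Core.

End P6.
Import P6.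

Module P7.

Section IntTerm.
Variable R : realType.
Local Notation lam := (@lebesgue_measure R).

Lemma L01 : ((@lebesgue_measure R) (`]0%R, 1%R[%classic : set R) = 1)%E.
Proof.
have := lebesgue_measure_itv (`]0%R, 1%R[ : interval R).
move=> ->. rewrite /= lte_fin ltr01 sube0 //.
Qed.

Lemma Litv (l u : R) : ((@lebesgue_measure R) (`]l, u[%classic : set R) = (Num.max (u - l) 0)%:E)%E.
Proof.
rewrite lebesgue_measure_itv /= lte_fin.
case: ltP => hlu.
  by rewrite -EFinB; congr EFin; apply/esym/max_idPl; rewrite subr_ge0 ltW.
by congr EFin; apply/esym/max_idPr; rewrite subr_le0.
Qed.

Lemma meas_term (c l u : R) :
  measurable_fun (`]0%R, 1%R[%classic : set R)
    (fun th : R => (c * (1 - \1_(`]l, u[%classic : set R) th))%:E).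
Proof.
apply/measurable_EFinP.
apply: measurable_funM; first exact: measurable_cst.
apply: measurable_funB; first exact: measurable_cst.
apply: measurable_indic; exact: measurable_itv.
Qed.

Lemma term_ge0 (c l u th : R) : (0 <= c)%R ->
  (0 <= (c * (1 - \1_(`]l, u[%classic : set R) th))%:E)%E.
Proof.
move=> c0; rewrite lee_fin mulr_ge0 // indicE subr_ge0; try by case: (th \in _).
Qed.

Lemma int_term (c l u : R) : (0 <= c)%R -> (c != 0 -> 0 <= l /\ u <= 1)%R ->
  (\int[lam]_(th in `]0%R, 1%R[) (c * (1 - \1_(`]l, u[%classic : set R) th))%:E
  = (c * (1 - Num.max (u - l) 0))%:E)%E.
Proof.
move=> c0 hc.
have [->|cn0] := eqVneq c 0%R.
  rewrite mul0r; under eq_integral do rewrite mul0r.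
  by rewrite integral0.
have [l0 u1] := hc cn0.
set I := (`]l, u[%classic : set R).
have mI : measurable I by exact: measurable_itv.
have mD : measurable (`]0%R, 1%R[%classic : set R) by exact: measurable_itv.
have HD : (\int[lam]_(th in `]0%R, 1%R[) (c%:E) = c%:E)%E.
  have := integral_cst lam mD c%:E; rewrite /cst => ->.
  transitivity (c%:E * 1)%E; last by rewrite mule1.
  congr (_ * _)%E; exact: L01.
have HI : (\int[lam]_(th in `]0%R, 1%R[) (c * \1_I th)%:E = (c * Num.max (u - l) 0)%:E)%E.
  have H := @integralZl_indic _ _ _ lam _ mD (fun _ => I) c.
  rewrite /= in H; rewrite H //; last by move=> /lt_geF; rewrite c0.
  rewrite integral_indic //.
  have -> : (I `&` `]0%R, 1%R[)%classic = I.
    apply/seteqP; split => [y [] //|y Iy]; split => //.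
    move: Iy; rewrite /I /= !in_itv /= => /andP[h1 h2].
    by apply/andP; split; [apply: le_lt_trans h1|apply: lt_le_trans u1].
  rewrite EFinM; congr (_ * _)%E; exact: Litv.
have HS : (\int[lam]_(th in `]0%R, 1%R[) ((c * (1 - \1_I th))%:E + (c * \1_I th)%:E) = c%:E)%E.
  rewrite -HD; apply: eq_integral => th _; rewrite -EFinD; congr EFin; ring.
rewrite ge0_integralD // in HS; first last.
- apply/measurable_EFinP; apply: measurable_funM; first exact: measurable_cst.
  by apply: measurable_indic.
- by move=> th _; rewrite lee_fin mulr_ge0 // indicE; case: (th \in _).
- exact: meas_term.
- by move=> th _; exact: term_ge0.
rewrite HI in HS.
have := congr1 (fun z => (z - (c * Num.max (u - l) 0)%:E)%E) HS.
rewrite addeK // => ->.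
by rewrite -EFinB; congr EFin; ring.
Qed.
End IntTerm.

End P7.
Import P7.

Module P8.

Section Main.
Variables (R : realType) (d : nat) (med : seq (Rpoint R d) -> Rpoint R d) (eps : R)
  (x : Rpoint R d) (Ct : seq (Rpoint R d)) (Dt : R).
Local Notation P := (Rpoint R d).
Local Notation crd := (@Defs.coord R d).
Local Notation lam := (@lebesgue_measure R).
Hypotheses (hd : (0 < d)%N) (he : 0 < eps <= 1/320)
  (hmed : forall S, S != [::] -> is_median S (med S)) (hDt : cdiam Ct <= Dt) (Dt0 : 0 < Dt).

Definition far (a b : P) := Dt / 2 <= enorm (a - b).
Definition wab (C : seq P) (a b : P) : R := (far a b && (a \in C) && (b \in C))%:R.
Definition Npairs (C : seq P) := \sum_(a <- Ct) \sum_(b <- Ct) wab C a b.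
Definition qq : R := 1 - (80 * d%:R)^-1.
Definition Iset (C : seq P) i s a b :=
  (`](lI med eps C i s a b), (uI med eps C i s a b)[%classic : set R).
Definition Gf n (C : seq P) i s th := qq ^+ n *
  \sum_(a <- Ct) \sum_(b <- Ct) (wab C a b * (1 - \1_(Iset C i s a b) th)).

Lemma qq_ge0 : 0 <= qq.
Proof.
rewrite /qq subr_ge0 invf_le1 //; last by rewrite mulr_gt0 // ltr0n.
have : 1 <= d%:R :> R by rewrite ler1n.
lra.
Qed.

Lemma wab_ge0 C a b : 0 <= wab C a b.
Proof. by rewrite /wab ler0n. Qed.

Lemma Npairs_ge0 C : 0 <= Npairs C.
Proof. by apply: sumr_ge0 => a _; apply: sumr_ge0 => b _; exact: wab_ge0. Qed.

Lemma far_neq a b : far a b -> a != b.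
Proof.
move=> hf; apply/eqP => E; move: hf; rewrite /far E subrr.
have -> : enorm (0 : P) = 0.
  rewrite /enorm big1 ?sqrtr0 //.
  by move=> i _; rewrite /Defs.coord mxE expr0n.
move=> h; have := Dt0; lra.
Qed.

Lemma prob_ge0 n E (T : tree R d) : (0 <= prob_after med eps n E T)%E.
Proof.
elim: n T => [|n IH] T /=; first by case: (E T).
apply: mule_ge0; first by rewrite lee_fin invr_ge0 mulr_ge0 // ler0n.
apply: sume_ge0 => i _; apply: sume_ge0 => s _.
by apply: integral_ge0 => th _; exact: IH.
Qed.

Lemma claim1 n (C : seq P) i s th : {subset C <= Ct} ->
  Npairs (gstep med eps x (i, th, s) C) * qq ^+ n <= Gf n C i s th.
Proof.
move=> HC; rewrite /Gf mulrC; apply: ler_wpM2l; first exact: exprn_ge0 qq_ge0.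
apply: ler_sum => a _; apply: ler_sum => b _.
have Hsub := @gstep_sub _ _ med eps x (i, th, s) C.
rewrite /wab indicE.
case Hth: (th \in Iset C i s a b) => /=; last first.
  rewrite subr0 mulr1 ler_nat.
  case: (boolP (far a b && (a \in gstep med eps x (i, th, s) C) && (b \in gstep med eps x (i, th, s) C))) => [/andP[/andP[hf ha] hb]|_] //.
  by rewrite hf (Hsub _ ha) (Hsub _ hb).
rewrite subrr mulr0.
case Hf: (far a b) => //=.
case: (boolP ((a \in gstep med eps x (i, th, s) C) && (b \in gstep med eps x (i, th, s) C))) => [H|_]; last by [].
have /andP[Ha Hb] := H.
move: (Hsub _ Ha) (Hsub _ Hb) => Ha' Hb'.
exfalso; move: H; apply/negP; apply: (@sep _ _ med eps x C i th s a b) => //.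
- case/andP: he => e0 e1; apply/andP; split; lra.
- exact: far_neq.
- by move: Hth => /set_mem; rewrite /Iset /= => H; rewrite in_itv /= in H.
Qed.

End Main.

End P8.
Import P8.

Module P9.

Lemma sum_ge_term (R : realType) (T : eqType) (s : seq T) (F : T -> R) a :
  (forall y, 0 <= F y) -> a \in s -> F a <= \sum_(y <- s) F y.
Proof.
move=> F0 Ha; rewrite (big_rem a Ha) /= lerDl.
by apply: sumr_ge0 => y _.
Qed.

Section Main2.
Variables (R : realType) (d : nat) (med : seq (Rpoint R d) -> Rpoint R d) (eps : R)
  (x : Rpoint R d) (Ct : seq (Rpoint R d)) (Dt : R).
Local Notation P := (Rpoint R d).
Local Notation crd := (@Defs.coord R d).
Local Notation lam := (@lebesgue_measure R).
Hypotheses (hd : (0 < d)%N) (he : 0 < eps <= 1/320)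
  (hmed : forall S, S != [::] -> is_median S (med S)) (hDt : cdiam Ct <= Dt) (Dt0 : 0 < Dt).

Local Notation wab := (wab Dt).
Local Notation Npairs := (Npairs Ct Dt).
Local Notation qq := (qq R d).
Local Notation Gf := (Gf med eps Ct Dt).
Local Notation Iset := (Iset med eps).

Definition len (C : seq P) i s a b := Num.max (uI med eps C i s a b - lI med eps C i s a b) 0.

Lemma claim2 n (C : seq P) i s : 0 <= eps ->
  (\int[lam]_(th in `]0%R, 1%R[) (Gf n C i s th)%:E =
   (qq ^+ n * \sum_(a <- Ct) \sum_(b <- Ct) (wab C a b * (1 - len C i s a b)))%:E)%E.
Proof.
move=> e0.
have mD : measurable (`]0%R, 1%R[%classic : set R) by exact: measurable_itv.
have E1 th : (Gf n C i s th)%:E = (\sum_(a <- Ct) \sum_(b <- Ct)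
     ((qq ^+ n * wab C a b) * (1 - \1_(Iset C i s a b) th))%:E)%E.
  rewrite /P8.Gf mulr_sumr -sumEFin; apply: eq_bigr => a _.
  by rewrite mulr_sumr -sumEFin; apply: eq_bigr => b _; rewrite mulrA.
under eq_integral => th _ do rewrite E1.
rewrite ge0_integral_sum //; first last.
- move=> a th _; apply: sume_ge0 => b _; apply: term_ge0.
  by rewrite mulr_ge0 ?exprn_ge0 ?(qq_ge0 R hd) ?wab_ge0.
- move=> a; apply: emeasurable_sum => b; exact: meas_term.
rewrite mulr_sumr -sumEFin; apply: eq_bigr => a _.
rewrite ge0_integral_sum //; first last.
- move=> b th _; apply: term_ge0.
  by rewrite mulr_ge0 ?exprn_ge0 ?(qq_ge0 R hd) ?wab_ge0.
- move=> b; exact: meas_term.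
rewrite mulr_sumr -sumEFin; apply: eq_bigr => b _.
rewrite int_term; last first.
- move=> hc; split; first by rewrite /lI; case: ifP => _; exact: sqr_ge0.
  move: hc; rewrite /P8.wab; case: (boolP (_ && _)) => [/andP[/andP[_ Ha] Hb] _|_]; last by rewrite mulr0 eqxx.
  exact: uI_le1.
- by rewrite mulr_ge0 ?exprn_ge0 ?(qq_ge0 R hd) ?wab_ge0.
by rewrite /len mulrA.
Qed.

Definition Ev := fun T : tree R d => Dt / 2 <= cdiam (leaf_centers x T).

Lemma per_pair (C : seq P) a b : {subset C <= Ct} ->
  \sum_(i < d) \sum_(s : bool) (wab C a b * (1 - len C i s a b))
  <= wab C a b * (2 * d%:R * qq).
Proof.
move=> HC.
rewrite /P8.wab; case: (boolP (_ && _)) => [/andP[/andP[hf Ha] Hb]|_]; last first.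
  by rewrite mul0r big1 // => i _; rewrite big1 // => s _; rewrite mul0r.
rewrite mul1r.
under eq_bigr => i _ do under eq_bigr => s _ do rewrite mul1r.
have hCne : C != [::] by apply/eqP => E; rewrite E in Ha.
have hcore := @core_len R d med eps C a b Dt he (hmed hCne) Ha Hb
   (le_trans (cdiam_sub HC) hDt) hf Dt0.
have -> : \sum_(i < d) \sum_(s : bool) (1 - len C i s a b) =
   2 * d%:R - \sum_(i < d) \sum_(s : bool) len C i s a b.
  rewrite -[X in X - _](_ : \sum_(i < d) \sum_(s : bool) (1 : R) = 2 * d%:R).
    by rewrite -sumrB; apply: eq_bigr => i _; rewrite -sumrB.
  rewrite big_bool /= sumr_const card_ord.
  by rewrite -[X in X = _]mulr_natr; ring.
have d0 : 0 < d%:R :> R by rewrite ltr0n.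
have -> : 2 * d%:R * qq = 2 * d%:R - 1/40.
  by rewrite /P8.qq; field; rewrite gt_eqF.
move: hcore; rewrite /len; lra.
Qed.

Lemma main_ind n : forall T : tree R d, {subset leaf_centers x T <= Ct} ->
  (prob_after med eps n Ev T <= (Npairs (leaf_centers x T) * qq ^+ n)%:E)%E.
Proof.
elim: n => [|n IH] T HC.
  rewrite /= expr0 mulr1 /Ev; case: ifP => H; last by rewrite lee_fin Npairs_ge0.
  have Dt2 : 0 < Dt / 2 by have := Dt0; lra.
  have [a [b [Ha Hb Hab]]] := cdiam_attain Dt2 H.
  rewrite lee_fin.
  apply: le_trans (_ : wab (leaf_centers x T) a b <= _).
    by rewrite /P8.wab /P8.far Hab Ha Hb.
  apply: le_trans (sum_ge_term (fun b => wab_ge0 _ _ _ _) (HC _ Hb)) _.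
  exact: (sum_ge_term (fun a => sumr_ge0 _ (fun b _ => wab_ge0 Dt _ a b)) (HC _ Ha)).
set C := leaf_centers x T.
have e0 : 0 <= eps by case/andP: he => e0 _; exact: ltW.
have B : forall i s, (\int[lam]_(th in `]0%R, 1%R[)
      prob_after med eps n Ev (ds_step med eps (i, th, s) T)
    <= (qq ^+ n * \sum_(a <- Ct) \sum_(b <- Ct) (wab C a b * (1 - len C i s a b)))%:E)%E.
  move=> i s; rewrite -claim2 //.
  apply: le_int_nm => th _; first exact: prob_ge0.
  have HC' : {subset leaf_centers x (ds_step med eps (i, th, s) T) <= Ct}.
    by move=> c; rewrite lc_step => /gstep_sub /HC.
  apply: le_trans (IH _ HC') _.
  rewrite lee_fin lc_step.
  exact: (@claim1 _ _ med eps x Ct Dt hd he Dt0 n C i s th HC).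
rewrite /=.
apply: le_trans (_ : (((2 * d%:R)^-1)%:E * \sum_(i < d) \sum_(s : bool)
   (qq ^+ n * \sum_(a <- Ct) \sum_(b <- Ct) (wab C a b * (1 - len C i s a b)))%:E <= _)%E).
  apply: lee_wpmul2l; first by rewrite lee_fin invr_ge0 mulr_ge0 // ler0n.
  by apply: lee_sum => i _; apply: lee_sum => s _; exact: B.
under eq_bigr => i _ do rewrite sumEFin.
rewrite sumEFin -EFinM lee_fin.
under eq_bigr => i _ do rewrite -mulr_sumr.
rewrite -mulr_sumr.
under eq_bigr => i _ do rewrite exchange_big.
rewrite exchange_big.
under eq_bigr => a _ do (under eq_bigr => i _ do rewrite exchange_big).
under eq_bigr => a _ do rewrite exchange_big.
have H1 : \sum_(a <- Ct) \sum_(b <- Ct) \sum_(i < d) \sum_(s : bool) (wab C a b * (1 - len C i s a b))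
   <= Npairs C * (2 * d%:R * qq).
  rewrite /P8.Npairs mulr_suml; apply: ler_sum => a _; rewrite mulr_suml.
  by apply: ler_sum => b _; exact: per_pair.
have d0 : 0 < d%:R :> R by rewrite ltr0n.
have q0 : 0 <= qq ^+ n by rewrite exprn_ge0 // (qq_ge0 R hd).
have := ler_wpM2l q0 H1 => H2.
have := ler_wpM2l (_ : 0 <= (2 * d%:R)^-1) H2 => H3.
apply: le_trans (H3 _) _; first by rewrite invr_ge0 mulr_ge0 // ler0n.
rewrite exprS le_eqVlt; apply/orP; left; apply/eqP; field; rewrite gt_eqF //.
Qed.

End Main2.

End P9.
Import P9.

Module P10.

Section Fin.
Variables (R : realType) (d : nat) (med : seq (Rpoint R d) -> Rpoint R d) (eps : R)
  (x : Rpoint R d) (C : seq (Rpoint R d)).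

Definition allsub (T : tree R d) := all (fun u : leaf R d => subseq u.2 C) T.

Lemma ds_step_all w T : allsub T -> allsub (ds_step med eps w T).
Proof.
elim: T => [|u T IH] //= /andP[hu hT].
rewrite /allsub /ds_step /= all_cat -/(ds_step med eps w T).
have -> : all (fun u : leaf R d => subseq u.2 C) (ds_step med eps w T) by exact: IH.
rewrite andbT; clear IH hT.
case: w => [[i th] s]; case: u hu => [cell Cu] /= hu.
rewrite /divide_share.
case: ifP => _ /=; last by rewrite hu.
case: ifP => _ /=; last by rewrite hu.
by rewrite !(subseq_trans (filter_subseq _ _) hu).
Qed.

Lemma tree_after_all h : allsub (tree_after med eps C h).
Proof.
rewrite /tree_after.
have : allsub [:: ((fun _ => true) : pred (Rpoint R d), C)] by rewrite /allsub /= subseq_refl.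
elim: h [:: _] => [|w h IH] T //= HT.
by apply: IH; exact: ds_step_all.
Qed.

Lemma lc_subseq T : allsub T -> subseq (leaf_centers x T) C.
Proof.
move=> /allP H; rewrite /leaf_centers.
case: (ltnP (find (fun u : leaf R d => u.1 x) T) (size T)) => h.
  exact: (H _ (mem_nth _ h)).
by rewrite nth_default // sub0seq.
Qed.
End Fin.

Lemma sum_const_seq (R : realType) (T : Type) (s : seq T) (v : R) :
  \sum_(c <- s) v = (size s)%:R * v.
Proof.
rewrite -(count_predT s) -sum_if_count; apply: eq_bigr => c _ //.
Qed.

Lemma final_num (R : realType) (d k L : nat) (N : R) :
  (0 < d)%N -> (2 <= k)%N -> 0 <= N -> N <= (k ^ 2)%:R ->
  640 * d%:R * ln (k%:R : R) <= L%:R ->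
  N * (1 - (80 * d%:R)^-1) ^+ L <= ((k ^ 3)%:R)^-1.
Proof.
move=> hd hk N0 hN hL.
set K : R := k%:R.
have K2 : 2 <= K by rewrite /K ler_nat.
have K0 : 0 < K by lra.
have d0 : 0 < d%:R :> R by rewrite ltr0n.
set p : R := (80 * d%:R)^-1.
have p0 : 0 < p by rewrite /p invr_gt0 mulr_gt0.
have p1 : p <= 1.
  rewrite /p invf_le1 ?mulr_gt0 //; have : 1 <= d%:R :> R by rewrite ler1n.
  lra.
have q0 : 0 <= 1 - p by lra.
have H1 : (1 - p) ^+ L <= expR (- p) ^+ L.
  apply: lerXn2r; rewrite ?nnegrE ?expR_ge0 //.
  by have := expR_ge1Dx (- p); rewrite addrC.
rewrite -expRM_natr in H1.
have H2 : expR (- p * L%:R) <= expR (- (8%:R * ln K)).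
  rewrite ler_expR.
  have : p * (640 * d%:R * ln K) = 8%:R * ln K.
    by rewrite /p; field; rewrite gt_eqF.
  have lnK0 : 0 < ln K by apply: ln_gt0; lra.
  have := ler_wpM2l (ltW p0) hL.
  lra.
have H3 : expR (- (8%:R * ln K)) = ((K ^+ 8)^-1).
  by rewrite expRN expRM_natl lnK // posrE.
have Hq : (1 - p) ^+ L <= (K ^+ 8)^-1 by rewrite -H3; exact: le_trans H1 H2.
rewrite natrX -/K in hN *.
rewrite natrX -/K.
have K8 : 0 < K ^+ 8 by rewrite exprn_gt0.
have K3 : 1 <= K ^+ 3 by rewrite exprn_ege1 //; lra.
apply: le_trans (_ : K ^+ 2 * (K ^+ 8)^-1 <= _).
  apply: le_trans (ler_wpM2l N0 Hq) _.
  apply: ler_wpM2r => //; rewrite invr_ge0; exact: ltW.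
have -> : K ^+ 2 * (K ^+ 8)^-1 = (K ^+ 3)^-1 * (K ^+ 3)^-1.
  by field; rewrite gt_eqF.
rewrite -[X in _ <= X]mulr1; apply: ler_wpM2l.
  by rewrite invr_ge0; lra.
rewrite invf_le1 //; lra.
Qed.

End P10.
Import P10.

Unset Implicit Arguments.

Theorem lemma4 (R : realType) (d : nat) (C : seq (Rpoint R d))
  (delta : R) (med : seq (Rpoint R d) -> Rpoint R d) (x : Rpoint R d)
  (h : seq (ds_draw R d)) :
  (0 < d)%N -> uniq C -> (0 < delta < 1) ->
  (forall S, S != [::] -> is_median S (med S)) ->
  all (fun w : ds_draw R d => 0 < w.1.2 < 1) h ->
  let k := size C in
  let eps := Num.min (delta / (15 * ln k%:R)) (320%:R)^-1 in
  let L := `|Num.ceil (640 * d%:R * ln (k%:R : R))|%N in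
  let Dt := cdiam (leaf_centers x (tree_after med eps C h)) in
  0 < Dt ->
  (prob_after med eps L
     (fun T => (Dt / 2 <= cdiam (leaf_centers x T))%R) (tree_after med eps C h)
   <= ((k ^ 3)%:R^-1)%:E)%E.
Proof.
move=> hd _ hdel hmed _ k eps L Dt Dt0.
set T0 := tree_after med eps C h.
set Ct := leaf_centers x T0.
have hsub : subseq Ct C := lc_subseq x (tree_after_all med eps C h).
have [a [b [Ha Hb Hab]]] := cdiam_attain Dt0 (lexx Dt).
have ab : a != b.
  apply: (@far_neq _ _ Dt Dt0); rewrite /far; apply: le_trans Hab; lra.
have hk : (2 <= k)%N := leq_trans (size2 Ha Hb ab) (size_subseq hsub).
have lnk : 0 < ln (k%:R : R) by apply: ln_gt0; rewrite ltr1n.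
have he : 0 < eps <= 1/320.
  case/andP: hdel => d0 d1.
  have h1 : 0 < delta / (15 * ln k%:R) by rewrite divr_gt0 // mulr_gt0.
  rewrite /eps; apply/andP; split.
    by rewrite lt_min h1 invr_gt0 ltr0n.
  by rewrite ge_min mul1r lexx orbT.
have hL : 640 * d%:R * ln (k%:R : R) <= L%:R.
  rewrite /L natr_absz ger0_norm; first exact: ceil_ge.
  rewrite ceil_ge0.
  have : 0 <= 640 * d%:R * ln (k%:R : R).
    apply: mulr_ge0; last exact: ltW.
    by apply: mulr_ge0; [lra | rewrite ler0n].
  lra.
have main := @main_ind R d med eps x Ct Dt hd he hmed (lexx _) Dt0 L T0 (fun c hc => hc).
apply: le_trans main _.
rewrite lee_fin; apply: final_num hd hk (Npairs_ge0 _ _ _) _ hL.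
apply: le_trans (_ : \sum_(a <- Ct) \sum_(b <- Ct) (1 : R) <= _).
  by apply: ler_sum => a' _; apply: ler_sum => b' _; rewrite /P8.wab lern1 leq_b1.
rewrite sum_const_seq sum_const_seq mulr1 -natrM ler_nat -/k expnS expn1.
by have := size_subseq hsub; rewrite -/k => hs; apply: leq_mul.
Qed.
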